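(* Let $p=\tfrac12$. Then $K_\infty\phi=2\phi$. Consequently $\mu_n=\langle\phi,K_\infty^n\phi\rangle=2^n$ for all $n\ge0$, and the rooted spectral measure $\nu_\phi$ (the unique finite positive Borel measure with $\langle\phi,f(K_\infty)\phi\rangle=\int f\,d\nu_\phi$ for bounded Borel $f$) is $\nu_\phi=\delta_2$.
   Context: Let $S_0(x)=x/3$, $S_2(x)=(x+2)/3$ on $[0,1]$ and let $C$ be the middle-third Cantor set. $\mu=\mu_{1/2}$ is the unique Borel probability measure on $[0,1]$ with $\mu=\frac12\mu\circ S_0^{-1}+\frac12\mu\circ S_2^{-1}$. For words $w\in\{0,2\}^n$, $S_w=S_{w_1}\circ\cdots\circ S_{w_n}$, $C_w=S_w(C)$. Inner product $\langle f,g\rangle=\int\overline fg\,d\mu$; $\phi=1_C$. $K_mf=\sum_{|u|\le m}\langle1_{C_u},f\rangle1_{C_u}$ and $K_\infty=\lim_{m\to\infty}K_m$ in operator norm on $L^2(\mu)$ (this limit exists and is compact, positive, self-adjoint). *)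

(* Defs.v *)
From HB Require Import structures.
From mathcomp Require Import all_boot all_order all_algebra.
From mathcomp Require Import all_classical all_reals all_analysis.
Set Implicit Arguments. Unset Strict Implicit. Unset Printing Implicit Defensive.
Import Order.TTheory GRing.Theory Num.Theory.
Import numFieldNormedType.Exports.
Local Open Scope classical_set_scope.
Local Open Scope ring_scope.

Section Cantor.
Variable R : realType.

(** The two similitudes: [S false] is S_0 : x |-> x/3 and [S true] is
    S_2 : x |-> (x+2)/3 (viewed as maps R -> R). *)
Definition S (b : bool) (x : R) : R := if b then (x + 2) / 3 else x / 3.

Definition Sw (w : seq bool) : R -> R := foldr (fun b g => S b \o g) idfun w.

Definition cantor_set : set R :=
  [set x | forall n : nat, exists2 w : seq bool, size w = n & (Sw w @` `[0, 1]) x].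

Definition Cw (w : seq bool) : set R := Sw w @` cantor_set.

Definition phi : R -> R := \1_cantor_set.

End Cantor.

Section L2.
Context {R : realType} (mu : {measure set R -> \bar R}).
Local Open Scope ereal_scope.

Definition inner (f g : R -> R) : \bar R := \int[mu]_x (f x * g x)%:E.

Definition sqnorm (f : R -> R) : \bar R := \int[mu]_x ((f x) ^+ 2)%:E.

Definition L2 (f : R -> R) : Prop :=
  measurable_fun setT f /\ sqnorm f < +oo.

Definition Km (m : nat) (f : R -> R) : R -> R := fun x =>
  (\sum_(k < m.+1) \sum_(u : k.-tuple bool)
     fine (inner (\1_(Cw u)) f) * \1_(Cw u) x)%R.

End L2.

Section Operators.
Context {R : realType} (mu : {measure set R -> \bar R}).
Local Open Scope ereal_scope.

Definition cantor_measure : Prop :=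
  [/\ mu setT = 1,
      mu (~` `[0%R, 1%R]) = 0 &
      forall A : set R, measurable A ->
        mu A = (2^-1)%:E * mu (S false @^-1` A) + (2^-1)%:E * mu (S true @^-1` A)].

(** equality in L^2(mu), i.e. mu-almost everywhere *)
Definition aeeq (f g : R -> R) : Prop := {ae mu, forall x, f x = g x}.

Definition opnorm_limit (K : (R -> R) -> R -> R) : Prop :=
  (forall f, L2 mu f -> L2 mu (K f)) /\
  forall e : R, (0 < e)%R -> exists M : nat, forall m : nat, (M <= m)%N ->
    forall f, L2 mu f -> sqnorm mu (fun x => Km mu m f x - K f x)%R <= e%:E * sqnorm mu f.

Definition bounded_borel (f : R -> R) : Prop :=
  measurable_fun setT f /\ exists M : R, forall x, (`|f x| <= M)%R.

(** clamp_c(x) = max(-c, min(c, x)): equals the identity on [-c, c]. *)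
Definition clamp (c : R) (x : R) : R := (Num.max (- c) (Num.min c x))%R.

(** The (real) bounded Borel functional calculus f |-> Phi f = f(K) of the
    bounded self-adjoint operator K on L^2(mu):  a *-homomorphism from bounded
    Borel functions to bounded operators, bounded by the sup norm, sequentially
    continuous for bounded pointwise convergence (strong operator topology),
    sending the identity (on [-c,c] with c >= ||K||) to K.  Operators act on
    representatives; equalities are mu-a.e. *)
Record borel_fcalc (K : (R -> R) -> R -> R)
    (Phi : (R -> R) -> (R -> R) -> R -> R) : Prop := {
  fc_L2 : forall f h, bounded_borel f -> L2 mu h -> L2 mu (Phi f h);
  fc_ae : forall f h1 h2, bounded_borel f -> L2 mu h1 -> L2 mu h2 ->
    aeeq h1 h2 -> aeeq (Phi f h1) (Phi f h2);
  fc_linear : forall f (a : R) h1 h2, bounded_borel f -> L2 mu h1 -> L2 mu h2 ->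
    aeeq (Phi f (fun x => h1 x + a * h2 x)%R)
         (fun x => Phi f h1 x + a * Phi f h2 x)%R;
  fc_add : forall f g (a : R) h, bounded_borel f -> bounded_borel g -> L2 mu h ->
    aeeq (Phi (fun x => f x + a * g x)%R h)
         (fun x => Phi f h x + a * Phi g h x)%R;
  fc_one : forall h, L2 mu h -> aeeq (Phi (cst 1%R) h) h;
  fc_mul : forall f g h, bounded_borel f -> bounded_borel g -> L2 mu h ->
    aeeq (Phi (fun x => f x * g x)%R h) (Phi f (Phi g h));
  fc_selfadj : forall f h1 h2, bounded_borel f -> L2 mu h1 -> L2 mu h2 ->
    inner mu (Phi f h1) h2 = inner mu h1 (Phi f h2);
  fc_bound : forall f (M : R) h, bounded_borel f -> (forall x, `|f x| <= M)%R ->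
    L2 mu h -> sqnorm mu (Phi f h) <= (M ^+ 2)%:E * sqnorm mu h;
  fc_cont : forall (fn : nat -> R -> R) (f : R -> R) (M : R) h,
    (forall n, measurable_fun setT (fn n)) -> (forall n x, `|fn n x| <= M)%R ->
    (forall x, fn n x @[n --> \oo] --> f x) -> L2 mu h ->
    sqnorm mu (fun x => Phi (fn n) h x - Phi f h x)%R @[n --> \oo] --> 0;
  fc_id : forall c : R, (0 <= c)%R ->
    (forall h, L2 mu h -> sqnorm mu (K h) <= (c ^+ 2)%:E * sqnorm mu h) ->
    forall h, L2 mu h -> aeeq (Phi (clamp c) h) (K h)
}.

End Operators.

(* Main.v *)
Require Import Defs.
From HB Require Import structures.
From mathcomp Require Import all_boot all_order all_algebra.
From mathcomp Require Import all_classical all_reals all_analysis.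
Import Order.TTheory GRing.Theory Num.Theory.
Import numFieldNormedType.Exports.
Local Open Scope classical_set_scope.
Local Open Scope ring_scope.
From mathcomp Require Import lra ring measurable_realfun.
From mathcomp Require Import lebesgue_integral_theory.measurable_fun_approximation.
Set Implicit Arguments. Unset Strict Implicit. Unset Printing Implicit Defensive.

Section Geo.
Variable R : realType.

Definition I01 : set R := `[0, 1]%classic.

Lemma I01P (x : R) : I01 x <-> 0 <= x <= 1.
Proof. by rewrite /I01 /= in_itv /=. Qed.

Lemma S_inj b : injective (@S R b).
Proof.
move=> x y; rewrite /S; case: b => /= h.
- have : (x + 2) = (y + 2) by rewrite -[x+2](@mulfVK _ 3) ?h ?mulfVK //.
  by move/addIr.
- by rewrite -[x](@mulfVK _ 3) ?h ?mulfVK.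
Qed.

Lemma S_I b x : I01 x -> I01 (@S R b x).
Proof. rewrite !I01P /S => /andP[x0 x1]; case: b; apply/andP; split; lra. Qed.

Lemma Sw_I w x : I01 x -> I01 (@Sw R w x).
Proof. by elim: w => [//|b w IH] /= /IH; apply: S_I. Qed.

Lemma S_sep x y : I01 x -> I01 y -> @S R false x <> @S R true y.
Proof. rewrite !I01P /S => /andP[x0 x1] /andP[y0 y1] h; lra. Qed.

Lemma Sw_uniq u v x y : size u = size v -> I01 x -> I01 y ->
  @Sw R u x = @Sw R v y -> u = v.
Proof.
elim: u v => [|b u IH] [|c v] //= [] suv Ix Iy.
have Iu := Sw_I u Ix; have Iv := Sw_I v Iy.
case: b; case: c => h.
- by congr cons; apply: (IH v) => //; apply: (S_inj h).
- by exfalso; apply: (S_sep Iv Iu); rewrite h.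
- by exfalso; apply: (S_sep Iu Iv).
- by congr cons; apply: (IH v) => //; apply: (S_inj h).
Qed.


Lemma mI01 : measurable I01.
Proof. exact: measurable_itv. Qed.

Definition Sinv (b : bool) (y : R) : R := if b then 3 * y - 2 else 3 * y.

Lemma SinvK b : cancel (@S R b) (Sinv b).
Proof. by move=> a; rewrite /Sinv /S; case: b; field. Qed.

Lemma SK b : cancel (Sinv b) (@S R b).
Proof. by move=> a; rewrite /Sinv /S; case: b; field. Qed.

Lemma S_image b (A : set R) : S b @` A = Sinv b @^-1` A.
Proof.
apply/seteqP; split => x /=.
- by move=> [a Aa <-]; rewrite SinvK.
- by move=> h; exists (Sinv b x) => //; rewrite SK.
Qed.

Lemma mSinv b : measurable_fun setT (Sinv b).
Proof.
have -> : Sinv b = (cst 3 \* id) \- cst (if b then 2 else 0).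
  by apply/funext => y; rewrite /Sinv /=; case: b; rewrite ?subr0.
apply: measurable_funB; last exact: measurable_cst.
apply: measurable_funM; [exact: measurable_cst|exact: measurable_id].
Qed.

Lemma mS b : measurable_fun setT (@S R b).
Proof.
have -> : @S R b = (id \+ cst (if b then 2 else 0)) \* cst 3^-1.
  by apply/funext => y; rewrite /S /=; case: b; rewrite ?addr0.
apply: measurable_funM; last exact: measurable_cst.
apply: measurable_funD; [exact: measurable_id|exact: measurable_cst].
Qed.

Lemma mpre (f : R -> R) (A : set R) : measurable_fun setT f -> measurable A ->
  measurable (f @^-1` A).
Proof. by move=> mf mA; rewrite -[_ @^-1` _]setTI; apply: mf. Qed.

Lemma mS_image b (A : set R) : measurable A -> measurable (S b @` A).
Proof. by move=> mA; rewrite S_image; apply: mpre => //; exact: mSinv. Qed.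

Lemma Sw_image_cons b w (A : set R) : Sw (b :: w) @` A = S b @` (Sw w @` A).
Proof. by rewrite -image_comp. Qed.

Lemma mSw_image w (A : set R) : measurable A -> measurable (Sw w @` A).
Proof.
by elim: w => [|b w IH] mA; [rewrite image_id|rewrite Sw_image_cons; apply: mS_image; apply: IH].
Qed.

Fixpoint E (n : nat) : set R :=
  if n is n'.+1 then S false @` E n' `|` S true @` E n' else I01.

Lemma E_char n x : E n x <-> exists2 w, size w = n & (Sw w @` I01) x.
Proof.
elim: n x => [|n IH] x /=.
- split; first by move=> h; exists [::] => //; exists x.
  by case=> -[|//] _ [y Iy <-].
- split.
  + by case=> -[y /IH [w sw [z Iz <-]] <-]; [exists (false :: w)|exists (true :: w)];
      rewrite /= ?sw //; exists z.
  + case=> -[//|b w] /= [sw] [z Iz <-].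
    have Ew : E n (Sw w z) by apply/IH; exists w => //; exists z.
    by case: b; [right|left]; exists (Sw w z).
Qed.

Lemma E_sub_I n : E n `<=` I01.
Proof. by move=> x /E_char [w _ [z Iz <-]]; apply: Sw_I. Qed.

Lemma mE n : measurable (E n).
Proof. elim: n => [|n IH] /=; first exact: mI01.
by apply: measurableU; apply: mS_image. Qed.

Lemma E_decr n : E n.+1 `<=` E n.
Proof.
elim: n => [|n IH] /=.
- by move=> x [] [y Iy <-]; apply: S_I.
- by move=> x [] [y Ey <-]; [left|right]; exists y => //; apply: IH.
Qed.

Lemma C_E : @cantor_set R = \bigcap_n E n.
Proof.
apply/seteqP; split => x /=.
- by move=> h n _; apply/E_char; apply: h.
- by move=> h n; apply/E_char; apply: h.
Qed.

Lemma mC : measurable (@cantor_set R).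
Proof. rewrite C_E; apply: bigcapT_measurable => n; exact: mE. Qed.

Lemma C_I : @cantor_set R `<=` I01.
Proof. by rewrite C_E => x h; apply: (E_sub_I (h 0%N I)). Qed.

Lemma S_C b : S b @` (@cantor_set R) `<=` @cantor_set R.
Proof.
move=> _ [x Cx <-] [|n].
- by exists [::] => //; exists (S b x) => //; apply: S_I; apply: C_I.
- have [w sw [z Iz e]] := Cx n.
  by exists (b :: w); rewrite /= ?sw //; exists z => //=; rewrite e.
Qed.

Lemma Cw_cons b w : Cw (b :: w) = S b @` (@Cw R w).
Proof. by rewrite /Cw Sw_image_cons. Qed.

Lemma Cw_C w : @Cw R w `<=` @cantor_set R.
Proof.
elim: w => [|b w IH]; first by rewrite /Cw /= image_id.
by rewrite Cw_cons => _ [y Cy <-]; apply: S_C; exists y => //; apply: IH.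
Qed.

Lemma mCw w : measurable (@Cw R w).
Proof. by apply: mSw_image; apply: mC. Qed.

Lemma Cw_disj u v x : size u = size v -> Cw u x -> @Cw R v x -> u = v.
Proof.
move=> suv [y Cy <-] [z Cz e]; apply: (Sw_uniq suv (C_I Cy) (C_I Cz)).
by rewrite e.
Qed.

End Geo.
Arguments mI01 {R}. Arguments mC {R}. Arguments mE {R}. Arguments mCw {R}.
Arguments mS_image {R}. Arguments mSw_image {R}. Arguments mpre {R}.

Section Meas.
Variable R : realType.
Variable mu : {measure set R -> \bar R}.
Hypothesis Hmu : cantor_measure mu.

Local Open Scope ereal_scope.
Local Notation I := (@I01 R).

Lemma HT : mu setT = 1. Proof. by case: Hmu. Qed.
Lemma HO : mu (~` I) = 0. Proof. by case: Hmu. Qed.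
Lemma Hinv A : measurable A ->
  mu A = (2^-1)%:E * mu (S false @^-1` A) + (2^-1)%:E * mu (S true @^-1` A).
Proof. by case: Hmu => _ _; apply. Qed.

Lemma mu_I : mu I = 1.
Proof.
have h : mu (I `|` ~` I) = mu I + mu (~` I).
  exact: (measureU mu mI01 (measurableC mI01) (setICr _)).
by move: h; rewrite setUv HT HO adde0.
Qed.

Lemma mu_out b A : A `<=` I -> measurable A ->
  mu (S (~~ b) @^-1` (S b @` A)) = 0.
Proof.
move=> AI mA.
have mX : measurable (S (~~ b) @^-1` (S b @` A)).
  by apply: mpre; [exact: mS|exact: mS_image].
apply/eqP; rewrite eq_le measure_ge0 andbT -HO.
apply: (le_measure mu (mem_set mX) (mem_set (measurableC mI01))).
move=> x /= [a Aa e] Ix.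
have := @Sw_uniq R [:: ~~ b] [:: b] x a erefl Ix (AI _ Aa).
by rewrite /= e; case: b {e mX} => /(_ erefl).
Qed.

Lemma pre_image_S b (A : set R) : S b @^-1` (S b @` A) = A.
Proof.
apply/seteqP; split => x /=; last by move=> Ax; exists x.
by move=> [a Aa /S_inj <-].
Qed.

Lemma mu_S b A : measurable A -> A `<=` I -> mu (S b @` A) = (2^-1)%:E * mu A.
Proof.
move=> mA AI; rewrite Hinv; last exact: mS_image.
case: b.
- by rewrite (mu_out true AI mA) mule0 add0e pre_image_S.
- by rewrite (mu_out false AI mA) mule0 adde0 pre_image_S.
Qed.

Lemma mu_E n : mu (@E R n) = 1.
Proof.
elim: n => [|n IH] /=; first exact: mu_I.
have dis : S false @` @E R n `&` S true @` @E R n = set0.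
  apply/seteqP; split; last exact: sub0set.
  move=> x [[a Ea ea] [b Eb eb]].
  by apply: (S_sep (E_sub_I Ea) (E_sub_I Eb)); rewrite ea eb.
have h : mu (S false @` @E R n `|` S true @` @E R n) =
   mu (S false @` @E R n) + mu (S true @` @E R n).
  exact: (measureU mu (mS_image _ _ (mE n)) (mS_image _ _ (mE n)) dis).
rewrite h !mu_S ?IH; try exact: mE; try exact: E_sub_I.
by rewrite mule1 -EFinD; congr (_%:E); lra.
Qed.

Lemma mu_C : mu (@cantor_set R) = 1.
Proof.
have h := @nonincreasing_cvg_mu _ _ _ mu (@E R).
rewrite C_E; move: h; rewrite mu_E ltry => /(_ erefl (@mE R)).
move=> /(_ (bigcapT_measurable (@mE R))).
have nd : nonincreasing_seq (@E R).
  apply/nonincreasing_seqP => n; exact/subsetPset/E_decr.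
move=> /(_ nd) h.
have <- := cvg_lim _ h => //.
have -> : mu \o @E R = cst 1 by apply/funext => n /=; rewrite mu_E.
exact: lim_cst.
Qed.

Lemma mu_Cw w : mu (Cw w) = ((2^-1)^+(size w))%:E.
Proof.
elim: w => [|b w IH]; first by rewrite /Cw /= image_id mu_C expr0.
rewrite Cw_cons mu_S ?IH; first by rewrite -EFinM exprS.
- exact: mCw.
- by move=> x /Cw_C /C_I.
Qed.

End Meas.

Section Int.
Variable R : realType.
Variable mu : {measure set R -> \bar R}.
Hypothesis Hmu : cantor_measure mu.

Local Notation C := (@cantor_set R).
Local Notation ph := (@phi R).

Lemma int_indic_scale (a : R) (A : set R) : measurable A ->
  (\int[mu]_x (a * \1_A x)%:E = a%:E * mu A)%E.
Proof.
move=> mA.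
have h : (\int[mu]_(x in A) (cst a%:E) x = a%:E * mu A)%E.
  exact: (integral_cst mu mA).
rewrite -h [RHS]integral_mkcond; apply: eq_integral => x _.
rewrite patchE indicE; case: (x \in A) => /=; by rewrite ?mulr1 ?mulr0.
Qed.

Lemma mphi : measurable_fun setT ph.
Proof. by apply: measurable_indic; exact: mC. Qed.

Lemma phi2 x : ph x ^+ 2 = ph x.
Proof. by rewrite /phi indicE; case: (x \in C); rewrite ?expr1n ?expr0n. Qed.

Lemma int_phi (a : R) : (\int[mu]_x (a * ph x)%:E = a%:E)%E.
Proof. by rewrite int_indic_scale ?mu_C ?mule1 //; exact: mC. Qed.

Lemma L2phi : L2 mu ph.
Proof.
split; first exact: mphi.
rewrite /sqnorm.
have -> : (fun x => ((ph x) ^+ 2)%:E) = (fun x => (1 * ph x)%:E).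
  by apply/funext => x; rewrite phi2 mul1r.
by rewrite int_phi ?ltry.
Qed.


Definition N (k : nat) (x : R) : R := \sum_(u : k.-tuple bool) \1_(Cw (val u)) x.

Lemma N_val k x : N k x = if `[< exists u : k.-tuple bool, Cw (val u) x >] then 1 else 0.
Proof.
rewrite /N; case: asboolP => [[u0 hu0]|hn].
- rewrite (bigD1 u0) //= big1 ?addr0; first by rewrite indicE mem_set.
  move=> u uu0; rewrite indicE memNset // => hu; move/negP: uu0; apply.
  apply/eqP/val_inj; apply: (Cw_disj _ hu hu0).
  by rewrite !size_tuple.
- by rewrite big1 // => u _; rewrite indicE memNset // => hu; apply: hn; exists u.
Qed.

Lemma N_le k x : 0 <= N k x <= ph x.
Proof.
rewrite N_val /phi indicE; case: asboolP => [[u hu]|_].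
- by rewrite (mem_set (Cw_C hu)) ler01 lexx.
- by case: (x \in C); rewrite /= ?lexx ?ler01.
Qed.

Lemma mN k : measurable_fun setT (N k).
Proof.
rewrite /N; apply: measurable_sum => u; apply: measurable_indic; exact: mCw.
Qed.

Lemma int_N k : (\int[mu]_x (N k x)%:E = 1)%E.
Proof.
rewrite /N.
under eq_integral do rewrite -sumEFin.
rewrite ge0_integral_sum //.
under eq_bigr => u _.
  rewrite (_ : (\int[mu]_x (\1_(Cw (val u)) x)%:E)%E = ((2^-1)^+k)%:E); last first.
    have h := int_indic_scale 1 (mCw (val u)).
    under eq_integral do rewrite -[\1_(Cw _) _]mul1r.
    by rewrite h mul1e (mu_Cw Hmu) size_tuple.
  over.
rewrite sumEFin sumr_const card_tuple card_bool; congr (_%:E).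
  by rewrite -[_ *+ _]mulr_natr natrX -exprMn mulVf ?expr1n.
by move=> u; apply/measurable_EFinP; apply: measurable_indic; exact: mCw.
Qed.

Lemma N_ae k : {ae mu, forall x, N k x = ph x}.
Proof.
have mD : measurable_fun setT (fun x => (ph x - N k x)%:E).
  by apply/measurable_EFinP; apply: measurable_funB; [exact: mphi|exact: mN].
have h0 : (\int[mu]_x `|(ph x - N k x)%:E| = 0)%E.
  have e1 : (\int[mu]_x (ph x)%:E = \int[mu]_x ((N k x)%:E + (ph x - N k x)%:E))%E.
    by apply: eq_integral => x _; rewrite -EFinD addrC subrK.
  rewrite ge0_integralD // in e1; first last.
  - by move=> x _; rewrite lee_fin subr_ge0; case/andP: (N_le k x).
  - by apply/measurable_EFinP; exact: mN.
  - by move=> x _; rewrite lee_fin; case/andP: (N_le k x).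
  move: e1; rewrite int_N.
  have -> : (\int[mu]_x (ph x)%:E = 1)%E.
    by have := int_phi 1; under eq_integral do rewrite mul1r.
  have -> : (fun x => `|(ph x - N k x)%:E|%E) = (fun x => (ph x - N k x)%:E).
    apply/funext => x; rewrite gee0_abs // lee_fin subr_ge0.
    by case/andP: (N_le k x).
  set X := (\int[mu]_x _)%E.
  have X0 : (0 <= X)%E.
    by apply: integral_ge0 => x _; rewrite lee_fin subr_ge0; case/andP: (N_le k x).
  case: X X0 => [r| |] //=.
  + rewrite lee_fin => r0 /eqP; rewrite -EFinD eqe => /eqP h.
    by congr (_%:E); lra.
have := (ae_eq_integral_abs mu measurableT mD).1 h0.
apply: filterS => x /(_ I) /= /eqP; rewrite eqe subr_eq0 => /eqP ->.
by [].
Qed.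

End Int.

Section KK.
Variable R : realType.
Variable mu : {measure set R -> \bar R}.
Hypothesis Hmu : cantor_measure mu.

Local Notation C := (@cantor_set R).
Local Notation ph := (@phi R).

Lemma inner_Cw f c (u : seq bool) : measurable_fun setT f ->
  {ae mu, forall x, f x = c * ph x} ->
  inner mu (\1_(Cw u)) f = (c * (2^-1)^+(size u))%:E.
Proof.
move=> mf hf; rewrite /inner.
rewrite (ae_eq_integral (fun x => (c * \1_(Cw u) x)%:E)) //.
- by rewrite int_indic_scale ?(mu_Cw Hmu) -?EFinM //; exact: mCw.
- apply/measurable_EFinP; apply: measurable_funM => //.
  by apply: measurable_indic; exact: mCw.
- apply/measurable_EFinP; apply: measurable_funM; first exact: measurable_cst.
  by apply: measurable_indic; exact: mCw.
- apply: filterS hf => x hx _; rewrite hx /phi !indicE.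
  case: (boolP (x \in Cw u)) => h.
  + by rewrite (mem_set (Cw_C (set_mem h))) !mulr1 mul1r.
  + by rewrite !mul0r mulr0.
Qed.

Lemma geom m : \sum_(k < m.+1) (2^-1 : R)^+k = 2 - (2^-1)^+m.
Proof.
elim: m => [|m IH]; first by rewrite big_ord1 !expr0; lra.
rewrite big_ord_recr /= IH exprS.
set t := (2^-1)^+m; lra.
Qed.

Lemma ae_allN m : {ae mu, forall x, forall k, (k <= m)%N -> N k x = ph x}.
Proof.
elim: m => [|m IH].
- by apply: filterS (N_ae Hmu 0) => x h k; rewrite leqn0 => /eqP ->.
- apply: filterS2 IH (N_ae Hmu m.+1) => x h1 h2 k.
  rewrite leq_eqVlt => /orP [/eqP ->//|]; rewrite ltnS; exact: h1.
Qed.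

Lemma Km_ae f c m : measurable_fun setT f -> {ae mu, forall x, f x = c * ph x} ->
  {ae mu, forall x, Km mu m f x = c * (2 - (2^-1)^+m) * ph x}.
Proof.
move=> mf hf.
have e : forall x, Km mu m f x = \sum_(k < m.+1) c * (2^-1)^+k * N k x.
  move=> x; rewrite /Km; apply: eq_bigr => k _; rewrite /N mulr_sumr.
  by apply: eq_bigr => u _; rewrite (inner_Cw _ mf hf) /= size_tuple.
apply: filterS (ae_allN m) => x h; rewrite e -geom mulr_sumr mulr_suml.
apply: eq_bigr => k _; rewrite h //; exact: (ltn_ord k).
Qed.

Lemma mKm m f : measurable_fun setT (Km mu m f).
Proof.
rewrite /Km; apply: measurable_sum => k; apply: measurable_sum => u.
apply: measurable_funM; first exact: measurable_cst.
by apply: measurable_indic; exact: mCw.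
Qed.

Lemma sq_tri (p q : R -> R) : measurable_fun setT p -> measurable_fun setT q ->
  (sqnorm mu (fun x => (p x + q x)%R) <= 2%:E * sqnorm mu p + 2%:E * sqnorm mu q)%E.
Proof.
move=> mp mq; rewrite /sqnorm.
have mp2 : measurable_fun setT (fun x => ((p x) ^+ 2)%:E).
  by apply/measurable_EFinP; exact: measurable_funX.
have mq2 : measurable_fun setT (fun x => ((q x) ^+ 2)%:E).
  by apply/measurable_EFinP; exact: measurable_funX.
have mp2' : measurable_fun setT (fun x => (2 * (p x) ^+ 2)%:E).
  apply/measurable_EFinP; apply: measurable_funM; first exact: measurable_cst.
  exact: measurable_funX.
have mq2' : measurable_fun setT (fun x => (2 * (q x) ^+ 2)%:E).
  apply/measurable_EFinP; apply: measurable_funM; first exact: measurable_cst.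
  exact: measurable_funX.
apply: (@le_trans _ _ (\int[mu]_x ((2 * p x ^+ 2)%:E + (2 * q x ^+ 2)%:E))%E).
  apply: ge0_le_integral => //.
  - by move=> x _; rewrite lee_fin sqr_ge0.
  - apply/measurable_EFinP; apply: measurable_funX; exact: measurable_funD.
  - have h : measurable_fun setT (fun x => (2 * p x ^+ 2 + 2 * q x ^+ 2)%:E).
      apply/measurable_EFinP; apply: measurable_funD; apply: measurable_funM;
        (try exact: measurable_cst); exact: measurable_funX.
    by apply: eq_measurable_fun h => x _; rewrite EFinD.
  - move=> x _; rewrite -EFinD lee_fin.
    have := sqr_ge0 (p x - q x); nra.
rewrite ge0_integralD //; first last.
- by move=> x _; rewrite lee_fin mulr_ge0 ?sqr_ge0.
- by move=> x _; rewrite lee_fin mulr_ge0 ?sqr_ge0.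
under eq_integral do rewrite EFinM.
under [X in (_ + X)%E]eq_integral do rewrite EFinM.
rewrite !ge0_integralZl_EFin //.
- by move=> x _; rewrite lee_fin sqr_ge0.
- by move=> x _; rewrite lee_fin sqr_ge0.
Qed.

End KK.

Section K1.
Variable R : realType.
Variable mu : {measure set R -> \bar R}.
Hypothesis Hmu : cantor_measure mu.

Local Notation C := (@cantor_set R).
Local Notation ph := (@phi R).

Lemma small (a b : R) M : 0 <= a -> 0 < b ->
  exists2 n, (M <= n)%N & a * (2^-1)^+n <= b.
Proof.
move=> a0 b0; set n := maxn M (Num.truncn (a / b)).
exists n; first exact: leq_maxl.
have h1 : a / b < n.+1%:R.
  apply: (lt_le_trans (truncnS_gt _)); rewrite ler_nat ltnS; exact: leq_maxr.
have h2 : n.+1%:R <= (2:R)^+n.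
  by rewrite -natrX ler_nat; apply: ltn_expl.
have h3 : a < b * (2:R)^+n.
  move: h1; rewrite ltr_pdivrMr // => h1.
  apply: (lt_le_trans h1); rewrite mulrC; apply: ler_wpM2l => //; exact: ltW.
rewrite exprVn ler_pdivrMr ?exprn_gt0 //; exact: ltW.
Qed.

Lemma sq_zero (g : R -> R) : measurable_fun setT g -> sqnorm mu g = 0%E ->
  {ae mu, forall x, g x = 0}.
Proof.
move=> mg h.
have mg2 : measurable_fun setT (fun x => ((g x) ^+ 2)%:E).
  by apply/measurable_EFinP; exact: measurable_funX.
have h' : (\int[mu]_x `|((g x) ^+ 2)%:E| = 0)%E.
  rewrite -h /sqnorm; apply: eq_integral => x _.
  by rewrite gee0_abs // lee_fin sqr_ge0.
have := (ae_eq_integral_abs mu measurableT mg2).1 h'.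
apply: filterS => x /(_ I) /= /eqP; rewrite eqe sqrf_eq0 => /eqP.
by [].
Qed.

Lemma ereal_le_eps (x : \bar R) : (0 <= x)%E ->
  (forall e : R, 0 < e -> (x <= e%:E)%E) -> x = 0%E.
Proof.
move=> x0 h; apply/eqP; rewrite eq_le x0 andbT; apply/lee_addgt0Pr => e e0.
by rewrite add0e; apply: h.
Qed.

Lemma sqnorm_ge0 f : (0 <= sqnorm mu f)%E.
Proof. by apply: integral_ge0 => x _; rewrite lee_fin sqr_ge0. Qed.

Lemma K_ae K : opnorm_limit mu K -> forall f c, L2 mu f ->
  {ae mu, forall x, f x = c * ph x} -> {ae mu, forall x, K f x = 2 * c * ph x}.
Proof.
move=> HK f c Lf hf; have [mf Sf] := Lf.
have mKf : measurable_fun setT (K f) := (HK.1 f Lf).1.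
have mcphi : measurable_fun setT (fun x => 2 * c * ph x).
  by apply: measurable_funM; [exact: measurable_cst|exact: mphi].
set g := fun x => K f x - 2 * c * ph x.
suff : {ae mu, forall x, g x = 0}.
  by apply: filterS => x; rewrite /g => /eqP; rewrite subr_eq0 => /eqP.
apply: sq_zero; first exact: measurable_funB.
apply: ereal_le_eps; first exact: sqnorm_ge0.
move=> e e0.
have S0 := sqnorm_ge0 f.
set s := fine (sqnorm mu f).
have sE : sqnorm mu f = s%:E by rewrite fineK // ge0_fin_numE.
have s0 : 0 <= s by rewrite -lee_fin -sE.
set e1 := e / (4 * (s + 1)).
have e10 : 0 < e1 by apply: divr_gt0 => //; apply: mulr_gt0 => //; lra.
have [M HM] := HK.2 e1 e10.
have [m Mm hm] := @small (c ^+ 2) (e / 4) M (sqr_ge0 c) (ltac:(lra) : 0 < e / 4).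
have h1 := HM m Mm f Lf.
have h2 : sqnorm mu (fun x => Km mu m f x - 2 * c * ph x) =
    ((c * (2^-1)^+m) ^+ 2)%:E.
  rewrite /sqnorm (ae_eq_integral (fun x => ((c * (2^-1)^+m) ^+ 2 * ph x)%:E)) //.
  - by rewrite int_phi.
  - apply/measurable_EFinP; apply: measurable_funX.
    by apply: measurable_funB => //; exact: mKm.
  - apply/measurable_EFinP; apply: measurable_funM; first exact: measurable_cst.
    exact: mphi.
  - apply: filterS (Km_ae Hmu m mf hf) => x hx _; rewrite hx; congr (_%:E).
    by rewrite /phi indicE; case: (x \in C); rewrite /=; ring.
have eg : g = fun x => (- (Km mu m f x - K f x)) + (Km mu m f x - 2 * c * ph x).
  by apply/funext => x; rewrite /g; ring.
rewrite eg; apply: le_trans (sq_tri _ _ _) _.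
- by apply: measurable_funN; apply: measurable_funB => //; exact: mKm.
- by apply: measurable_funB => //; exact: mKm.
have -> : sqnorm mu (fun x => - (Km mu m f x - K f x)) =
    sqnorm mu (fun x => Km mu m f x - K f x).
  by rewrite /sqnorm; congr integral; apply/funext => x; rewrite sqrrN.
rewrite h2; move: h1; rewrite sE -EFinM.
set X := sqnorm _ _ => hX.
apply: (@le_trans _ _ (2%:E * (e1 * s)%:E + 2%:E * ((c * (2^-1)^+m)^+2)%:E)%E).
  by rewrite leeD2r // lee_pmul2l.
rewrite -!EFinM -EFinD lee_fin.
have r0 : 0 <= (2^-1 : R)^+m by apply: exprn_ge0; lra.
have r1 : (2^-1 : R)^+m <= 1 by apply: exprn_ile1; lra.
have hc : (c * (2^-1)^+m)^+2 <= e / 4.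
  apply: le_trans hm; rewrite exprMn; apply: ler_wpM2l.
    exact: sqr_ge0.
  by rewrite expr2 -[X in _ <= X]mulr1; apply: ler_wpM2l.
have he : e1 * s <= e / 4.
  have sp : 0 < s + 1 by lra.
  have q : s / (s + 1) <= 1 by rewrite ler_pdivrMr // mul1r; lra.
  have -> : e1 * s = e / 4 * (s / (s + 1)).
    rewrite /e1; field; rewrite gt_eqF //.
  rewrite -[X in _ <= X]mulr1; apply: ler_wpM2l => //; lra.
lra.
Qed.

End K1.

Section K2.
Variable R : realType.
Variable mu : {measure set R -> \bar R}.
Hypothesis Hmu : cantor_measure mu.
Variable K : (R -> R) -> R -> R.
Hypothesis HK : opnorm_limit mu K.

Local Notation C := (@cantor_set R).
Local Notation ph := (@phi R).

Lemma K_phi : {ae mu, forall x, K ph x = 2 * ph x}.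
Proof.
have h : {ae mu, forall x, ph x = 1 * ph x} by apply: filterE => x; rewrite mul1r.
apply: filterS (K_ae Hmu HK (L2phi Hmu) h) => x; by rewrite mulr1.
Qed.

Lemma iter_K n : L2 mu (iter n K ph) /\
  {ae mu, forall x, iter n K ph x = 2 ^+ n * ph x}.
Proof.
elim: n => [|n [Ln hn]].
- split; first exact: (L2phi Hmu).
  by apply: filterE => x; rewrite expr0 mul1r.
- split; first exact: HK.1.
  apply: filterS (K_ae Hmu HK Ln hn) => x /=; by rewrite exprS.
Qed.

Lemma inner_iter n : inner mu ph (iter n K ph) = (2 ^+ n)%:E.
Proof.
have [[mi _] hn] := iter_K n.
rewrite /inner (ae_eq_integral (fun x => (2 ^+ n * ph x)%:E)) //.
- exact: int_phi.
- apply/measurable_EFinP; apply: measurable_funM => //; exact: mphi.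
- apply/measurable_EFinP; apply: measurable_funM; first exact: measurable_cst.
  exact: mphi.
- apply: filterS hn => x hx _; rewrite hx; congr (_%:E).
  by rewrite mulrCA -expr2 phi2.
Qed.

End K2.

Section K3.
Variable R : realType.
Variable mu : {measure set R -> \bar R}.
Hypothesis Hmu : cantor_measure mu.

Local Notation ph := (@phi R).

Lemma int_cstT (a : R) : (\int[mu]_x (a%:E) = a%:E)%E.
Proof.
have h : (\int[mu]_(x in setT) (cst a%:E) x = a%:E * mu setT)%E.
  exact: (integral_cst mu measurableT).
by rewrite h (HT Hmu) mule1.
Qed.

Lemma L1_bound h : L2 mu h -> exists I : R,
  [/\ 0 <= I, I ^+ 2 <= fine (sqnorm mu h) &
      forall A, measurable A -> `|fine (inner mu (\1_A) h)| <= I].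
Proof.
move=> [mh Sh].
have S0 := sqnorm_ge0 mu h.
set s := fine (sqnorm mu h).
have sE : sqnorm mu h = s%:E by rewrite fineK // ge0_fin_numE.
have s0 : 0 <= s by rewrite -lee_fin -sE.
have mabs : measurable_fun setT (fun x => (`|h x|)%:E).
  by apply/measurable_EFinP; apply: measurableT_comp => //; exact: normr_measurable.
have mh2 : measurable_fun setT (fun x => ((h x) ^+ 2)%:E).
  by apply/measurable_EFinP; exact: measurable_funX.
have key : forall t, 0 < t ->
    (\int[mu]_x (`|h x|)%:E <= (t / 2 + s / (2 * t))%:E)%E.
  move=> t t0.
  apply: (@le_trans _ _ (\int[mu]_x ((t / 2)%:E + ((2 * t)^-1)%:E * ((h x) ^+ 2)%:E))%E).
    apply: ge0_le_integral => //.
    - have hm : measurable_fun setT (fun x => (t / 2 + (2 * t)^-1 * (h x) ^+ 2)%:E).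
        apply/measurable_EFinP; apply: measurable_funD; first exact: measurable_cst.
        apply: measurable_funM; first exact: measurable_cst.
        exact: measurable_funX.
      by apply: eq_measurable_fun hm => x _; rewrite EFinD EFinM.
    - move=> x _; rewrite -EFinM -EFinD lee_fin.
      have e2 : (h x) ^+ 2 = `|h x| ^+ 2 by rewrite real_normK // num_real.
      rewrite e2.
      have := sqr_ge0 (`|h x| - t).
      set a := `|h x|.
      have -> : t / 2 + (2 * t)^-1 * a ^+ 2 = (t ^+ 2 + a ^+ 2) / (2 * t).
        by field; rewrite gt_eqF.
      rewrite ler_pdivlMr; last by lra.
      move=> ?; nra.
  rewrite ge0_integralD //; first last.
  - have hm : measurable_fun setT (fun x => ((2 * t)^-1 * (h x) ^+ 2)%:E).
      apply/measurable_EFinP; apply: measurable_funM; first exact: measurable_cst.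
      exact: measurable_funX.
    by apply: eq_measurable_fun hm => x _; rewrite EFinM.
  - by move=> x _; rewrite -EFinM lee_fin mulr_ge0 ?sqr_ge0 // invr_ge0; lra.
  - by move=> x _; rewrite lee_fin; lra.
  rewrite (int_cstT (t / 2)) ge0_integralZl_EFin //; last first.
  - by rewrite invr_ge0; lra.
  - by move=> x _; rewrite lee_fin sqr_ge0.
  rewrite -/(sqnorm mu h) sE -EFinM -EFinD lee_fin.
  by rewrite mulrC invfM /=; lra.
have Jfin : (\int[mu]_x (`|h x|)%:E < +oo)%E.
  by apply: le_lt_trans (key 1 ltr01) _; rewrite ltry.
have J0 : (0 <= \int[mu]_x (`|h x|)%:E)%E.
  by apply: integral_ge0 => x _; rewrite lee_fin normr_ge0.
set J := (\int[mu]_x (`|h x|)%:E)%E in Jfin J0 key.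
set I := fine J.
have JE : J = I%:E by rewrite fineK // ge0_fin_numE.
have I0 : 0 <= I by rewrite -lee_fin -JE.
exists I; split => //.
- have [I00|Ipos] := eqVneq I 0; first by rewrite I00 expr0n /=.
  have Ip : 0 < I by rewrite lt_def Ipos I0.
  have := key I Ip; rewrite JE lee_fin => hI.
  have su : s = 2 * I * (s / (2 * I)) by field; rewrite gt_eqF.
  set u := s / (2 * I) in hI su.
  rewrite su; move: hI; set v := I / 2 => hI.
  have vE : v = I / 2 by [].
  nra.
- move=> A mA.
  have mAh : measurable_fun setT (fun x => (\1_A x * h x)%:E).
    apply/measurable_EFinP; apply: measurable_funM => //.
  have h1 := le_abse_integral mu measurableT mAh.
  have h2 : (\int[mu]_x `|(\1_A x * h x)%:E| <= J)%E.
    apply: ge0_le_integral => //.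
    - have hm : measurable_fun setT (fun x => (`|\1_A x * h x|)%:E).
        apply/measurable_EFinP; apply: measurableT_comp; first exact: normr_measurable.
        by apply: measurable_funM => //; apply: measurable_indic; exact: mA.
      by apply: eq_measurable_fun hm => x _; rewrite abse_EFin.
    - move=> x _; rewrite abse_EFin lee_fin normrM.
      rewrite -[X in _ <= X]mul1r; apply: ler_wpM2r => //.
      by rewrite indicE; case: (x \in A); rewrite /= ?normr1 ?normr0 ?ler01.
  have h3 := le_trans h1 h2.
  rewrite /inner; move: h3; rewrite JE.
  case: (\int[mu]_x _)%E => [r| |] /=.
  + by rewrite lee_fin.
  + by rewrite normr0.
  + by rewrite normr0.
Qed.

End K3.

Section K4.
Variable R : realType.
Variable mu : {measure set R -> \bar R}.
Hypothesis Hmu : cantor_measure mu.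

Lemma K_bound K : opnorm_limit mu K -> exists c : R, 2 < c /\
  forall h, L2 mu h -> (sqnorm mu (K h) <= (c ^+ 2)%:E * sqnorm mu h)%E.
Proof.
move=> HK; have [M HM] := HK.2 1 ltr01.
set Nc := \sum_(k < M.+1) \sum_(u : k.-tuple bool) (1:R).
have N0 : 0 <= Nc by apply: sumr_ge0 => k _; apply: sumr_ge0 => u _; exact: ler01.
have cp : 2 < 2 * Nc ^+ 2 + 5 by have := sqr_ge0 Nc; lra.
exists (2 * Nc ^+ 2 + 5); split => // h Lh.
have [I [I0 I2 hI]] := L1_bound Hmu Lh.
have S0 := sqnorm_ge0 mu h.
set s := fine (sqnorm mu h) in I2.
have sE : sqnorm mu h = s%:E by rewrite fineK // ge0_fin_numE; case: Lh.
have s0 : 0 <= s by rewrite -lee_fin -sE.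
have hx : forall x, `|Km mu M h x| <= Nc * I.
  move=> x; rewrite /Km; apply: le_trans (ler_norm_sum _ _ _) _.
  rewrite /Nc mulr_suml; apply: ler_sum => k _.
  apply: le_trans (ler_norm_sum _ _ _) _; rewrite mulr_suml; apply: ler_sum => u _.
  rewrite mul1r normrM -[X in _ <= X]mulr1; apply: ler_pM => //.
  - by apply: hI; exact: mCw.
  - by rewrite indicE; case: (_ \in _); rewrite /= ?normr1 ?normr0 ?ler01.
have hKm : (sqnorm mu (Km mu M h) <= (Nc ^+ 2 * s)%:E)%E.
  rewrite /sqnorm -(int_cstT Hmu (Nc ^+ 2 * s)).
  apply: ge0_le_integral => //.
  - by move=> x _; rewrite lee_fin sqr_ge0.
  - by apply/measurable_EFinP; apply: measurable_funX; exact: mKm.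
  - move=> x _; rewrite lee_fin.
    have := hx x; have := normr_ge0 (Km mu M h x).
    rewrite -(real_normK (num_real (Km mu M h x))).
    set a := `|Km mu M h x| => a0 ha.
    have : a ^+ 2 <= (Nc * I) ^+ 2 by rewrite ler_pXn2r // ?nnegrE //; nra.
    move=> h2; apply: le_trans h2 _; rewrite exprMn; apply: ler_wpM2l => //.
    exact: sqr_ge0.
have h1 := HM M (leqnn M) h Lh.
have mK : measurable_fun setT (K h) := (HK.1 h Lh).1.
have eK : sqnorm mu (K h) = sqnorm mu (fun x => Km mu M h x + (- (Km mu M h x - K h x))).
  by congr sqnorm; apply/funext => x; ring.
rewrite eK; apply: le_trans (sq_tri _ _ _) _.
- exact: mKm.
- by apply: measurable_funN; apply: measurable_funB => //; exact: mKm.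
have -> : sqnorm mu (fun x => - (Km mu M h x - K h x)) =
    sqnorm mu (fun x => Km mu M h x - K h x).
  by rewrite /sqnorm; congr integral; apply/funext => x; rewrite sqrrN.
move: h1; rewrite sE mul1e => h1.
apply: (@le_trans _ _ (2%:E * (Nc ^+ 2 * s)%:E + 2%:E * s%:E)%E).
  by apply: leeD; rewrite lee_pmul2l.
rewrite -!EFinM -EFinD lee_fin.
set c := 2 * Nc ^+ 2 + 5.
have cE : c = 2 * Nc ^+ 2 + 5 by [].
have cc : c <= c ^+ 2 by rewrite expr2; nra.
have -> : 2 * (Nc ^+ 2 * s) + 2 * s = (2 * Nc ^+ 2 + 2) * s by ring.
apply: ler_wpM2r => //; lra.
Qed.

End K4.

Section FC0.
Variable R : realType.

Lemma clamp_bound (c x : R) : 0 <= c -> `|clamp c x| <= c.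
Proof.
move=> c0; rewrite /clamp.
case: (leP c x) => h1.
- by case: (leP (- c) c) => h2; rewrite ler_norml; apply/andP; split; lra.
- by case: (leP (- c) x) => h2; rewrite ler_norml; apply/andP; split; lra.
Qed.

Lemma clamp_eq2 (c x : R) : 2 < c -> clamp c x = 2 -> x = 2.
Proof.
move=> c2; rewrite /clamp.
case: (leP c x) => h1.
- by case: (leP (- c) c) => h2 e; lra.
- by case: (leP (- c) x) => h2 e; lra.
Qed.

Lemma mclamp (c : R) : measurable_fun setT (clamp c).
Proof.
have -> : clamp c = (cst (- c)) \max (fun x => Num.min c x) by [].
apply: measurable_maxr; first exact: measurable_cst.
have -> : (fun x : R => Num.min c x) = (cst c) \min id by [].
by apply: measurable_minr; [exact: measurable_cst|exact: measurable_id].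
Qed.

Definition eps (n : nat) : R := (n.+1%:R)^-1.
Definition vinv (n : nat) (u : R) : R := (Num.max u (eps n))^-1.

Lemma eps_gt0 n : 0 < eps n.
Proof. by rewrite /eps invr_gt0 ltr0n. Qed.

Lemma maxeps_gt0 n u : 0 < Num.max u (eps n).
Proof. by rewrite lt_max eps_gt0 orbT. Qed.

Lemma mvinv n : measurable_fun setT (vinv n).
Proof.
apply: nonincreasing_measurable => // a b ab.
rewrite /vinv lef_pV2 ?posrE ?maxeps_gt0 //.
by rewrite ge_max !le_max ab lexx orbT.
Qed.

Lemma vinv_ge0 n u : 0 <= vinv n u.
Proof. by rewrite /vinv invr_ge0 ltW // maxeps_gt0. Qed.

Lemma vinv_le1 n u : 0 <= u -> u * vinv n u <= 1.
Proof.
move=> u0; rewrite /vinv; set m := Num.max u (eps n).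
have m0 : 0 < m by exact: maxeps_gt0.
have um : u <= m by rewrite le_max lexx.
have mn0 : m != 0 by rewrite gt_eqF.
rewrite -(mulfV mn0); apply: ler_wpM2r => //.
by rewrite invr_ge0 ltW.
Qed.

Lemma vinv_bound n u : 0 <= u -> u * vinv n u ^+ 2 <= n.+1%:R.
Proof.
move=> u0; have h := vinv_le1 n u0.
have v0 := vinv_ge0 n u.
apply: (@le_trans _ _ (vinv n u)).
  by rewrite expr2 mulrA -[X in _ <= X]mul1r; apply: ler_wpM2r.
rewrite /vinv; set m := Num.max u (eps n).
have m0 : 0 < m by exact: maxeps_gt0.
have em : eps n <= m by rewrite le_max lexx orbT.
have -> : n.+1%:R = (eps n)^-1 :> R by rewrite /eps invrK.
by rewrite lef_pV2 ?posrE ?eps_gt0.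
Qed.

Lemma vinv_eq n u : eps n <= u -> vinv n u = u^-1.
Proof. by move=> h; rewrite /vinv (max_idPl h). Qed.

Lemma eps_small (u : R) : 0 < u -> exists N, forall n, (N <= n)%N -> eps n <= u.
Proof.
move=> u0; exists (Num.truncn (u^-1)) => n hn.
rewrite /eps invf_ple ?posrE ?ltr0n //.
apply/ltW; apply: (lt_le_trans (truncnS_gt _)).
by rewrite ler_nat ltnS.
Qed.

End FC0.

Section FC.
Variable R : realType.
Variable mu : {measure set R -> \bar R}.
Hypothesis Hmu : cantor_measure mu.
Variable K : (R -> R) -> R -> R.
Hypothesis HK : opnorm_limit mu K.
Variable Phi : (R -> R) -> (R -> R) -> R -> R.
Hypothesis FC : borel_fcalc mu K Phi.

Local Notation ph := (@phi R).

Lemma L2_0 : L2 mu (fun _ => 0 : R).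
Proof.
split; first exact: measurable_cst.
rewrite /sqnorm.
have -> : (fun x : R => (((fun _ => 0 : R) x) ^+ 2)%:E) = cst 0%E.
  by apply/funext => x; rewrite /= expr0n.
by rewrite integral0 ltry.
Qed.

Lemma bb_cst (a : R) : bounded_borel (cst a).
Proof. by split; [exact: measurable_cst|exists `|a|]. Qed.

Lemma ae_and (P Q : R -> Prop) : {ae mu, forall x, P x} -> {ae mu, forall x, Q x} ->
  {ae mu, forall x, P x /\ Q x}.
Proof. by move=> hP hQ; apply: filterS2 hP hQ => x a b. Qed.

Lemma Phi0 q : bounded_borel q -> aeeq mu (Phi q (fun _ => 0)) (fun _ => 0).
Proof.
move=> bq.
have h : aeeq mu (Phi q (fun x : R => 0 + 1 * 0))
   (fun x => Phi q (fun _ => 0) x + 1 * Phi q (fun _ => 0) x).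
  exact: (fc_linear FC 1 bq L2_0 L2_0).
have e : (fun x : R => (0:R) + 1 * 0) = (fun _ => 0) by apply/funext => x; rewrite mulr0 addr0.
rewrite e in h; apply: filterS h => x; lra.
Qed.


Lemma Phi_g0 g : bounded_borel g -> g 2 = 0 -> aeeq mu (Phi g ph) (fun _ => 0).
Proof.
move=> bg g2; have [mg [Bg hBg]] := bg.
have [c [c2 Hc]] := K_bound Hmu HK.
have c0 : 0 <= c by lra.
have Lph := L2phi Hmu.
have Hid := fc_id FC c0 Hc Lph.
pose y := fun x : R => clamp c x + (-2) * (cst 1 : R -> R) x.
have bcl : bounded_borel (clamp c).
  by split; [exact: mclamp|exists c => x; exact: clamp_bound].
have my : measurable_fun setT y.
  apply: measurable_funD; first exact: mclamp.
  by apply: measurable_funM; exact: measurable_cst.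
have by_ : bounded_borel y.
  split => //; exists (c + 2) => x; rewrite /y /= mulr1.
  apply: le_trans (ler_normD _ _) _; apply: lerD; first exact: clamp_bound.
  by rewrite normrN ger0_norm.
have Hy : aeeq mu (Phi y ph) (fun _ => 0).
  have h1 : aeeq mu (Phi y ph)
      (fun x => Phi (clamp c) ph x + (-2) * Phi (cst 1) ph x).
    exact: (fc_add FC (-2) bcl (bb_cst 1) Lph).
  have h2 := fc_one FC Lph.
  have h4 := K_phi Hmu HK.
  move: h1 h2 Hid h4; rewrite /aeeq => h1 h2 h3 h4.
  apply: filterS (ae_and h1 (ae_and h2 (ae_and h3 h4))) => x [-> [-> [-> ->]]].
  lra.
pose q n := fun x => g x * y x * (vinv n `|y x|) ^+ 2.
have bq : forall n, bounded_borel (q n).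
  move=> n; split.
  - apply: measurable_funM; first exact: measurable_funM.
    apply: measurable_funX; apply: measurableT_comp; first exact: mvinv.
    by apply: measurableT_comp => //; exact: normr_measurable.
  - exists (Bg * n.+1%:R) => x; rewrite /q -mulrA normrM.
    rewrite (normrM (y x)) (ger0_norm (sqr_ge0 _)).
    apply: ler_pM => //; first exact: mulr_ge0 (sqr_ge0 _).
    exact: vinv_bound.
pose G n := fun x => q n x * y x.
have HG : forall n, aeeq mu (Phi (G n) ph) (fun _ => 0).
  move=> n.
  have hm : aeeq mu (Phi (G n) ph) (Phi (q n) (Phi y ph)) := fc_mul FC (bq n) by_ Lph.
  have hae : aeeq mu (Phi (q n) (Phi y ph)) (Phi (q n) (fun _ => 0)).
    exact: (fc_ae FC (bq n) (fc_L2 FC by_ Lph) L2_0 Hy).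
  have h0 := Phi0 (bq n).
  move: hm hae h0; rewrite /aeeq => hm hae h0.
  by apply: filterS (ae_and hm (ae_and hae h0)) => x [-> [-> ->]].
have mG : forall n, measurable_fun setT (G n).
  by move=> n; apply: measurable_funM => //; case: (bq n).
have boundG : forall n x, `|G n x| <= Bg.
  move=> n x; rewrite /G /q.
  have -> : g x * y x * vinv n `|y x| ^+ 2 * y x =
      g x * (`|y x| * vinv n `|y x|) ^+ 2.
    by rewrite exprMn real_normK ?num_real //; ring.
  rewrite normrM (ger0_norm (sqr_ge0 _)) -[X in _ <= X]mulr1.
  apply: ler_pM => //; first exact: sqr_ge0.
  have h := vinv_le1 n (normr_ge0 (y x)).
  have h0 : 0 <= `|y x| * vinv n `|y x| by apply: mulr_ge0 => //; exact: vinv_ge0.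
  by rewrite expr2; nra.
have convG : forall x, G n x @[n --> \oo] --> g x.
  move=> x; case: (eqVneq (y x) 0) => hy.
  - have x2 : x = 2.
      by apply: (clamp_eq2 c2); move: hy; rewrite /y /= mulr1; lra.
    apply: cvg_near_cst; apply: nearW => n.
    by rewrite /G hy mulr0 x2 g2.
  - have ya : 0 < `|y x| by rewrite normr_gt0.
    have [N hN] := eps_small ya.
    apply: cvg_near_cst; exists N => // n /= hn.
    rewrite /G /q (vinv_eq (hN n hn)).
    have yn : `|y x| != 0 by rewrite gt_eqF.
    have -> : g x * y x * (`|y x|^-1) ^+ 2 * y x = g x * (y x ^+ 2 / `|y x| ^+ 2).
      by rewrite exprVn; ring.
    by rewrite -real_normK ?num_real // divff ?mulr1 // expf_neq0.
have hc := fc_cont FC mG boundG convG Lph.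
have mPg : measurable_fun setT (Phi g ph) := (fc_L2 FC bg Lph).1.
have const : forall n,
    sqnorm mu (fun x => Phi (G n) ph x - Phi g ph x) = sqnorm mu (Phi g ph).
  move=> n; rewrite /sqnorm; apply: ae_eq_integral => //.
  - apply/measurable_EFinP; apply: measurable_funX; apply: measurable_funB => //.
    have bG : bounded_borel (G n) by split; [exact: mG|exists Bg; exact: boundG].
    exact: (fc_L2 FC bG Lph).1.
  - by apply/measurable_EFinP; apply: measurable_funX.
  - by apply: filterS (HG n) => x hx _; rewrite hx sub0r sqrrN.
have e : (fun n => sqnorm mu (fun x => Phi (G n) ph x - Phi g ph x)) =
    (fun _ => sqnorm mu (Phi g ph)) := funext const.
rewrite e in hc.
have S0 : sqnorm mu (Phi g ph) = 0%E.
  by have := cvg_lim _ hc; rewrite lim_cst //; apply.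
exact: sq_zero S0.
Qed.

End FC.

Section Fin.
Variable R : realType.
Variable mu : {measure set R -> \bar R}.
Hypothesis Hmu : cantor_measure mu.
Variable K : (R -> R) -> R -> R.
Hypothesis HK : opnorm_limit mu K.
Variable Phi : (R -> R) -> (R -> R) -> R -> R.
Hypothesis FC : borel_fcalc mu K Phi.

Local Notation ph := (@phi R).

Lemma inner_Phi f : bounded_borel f -> inner mu ph (Phi f ph) = (f 2)%:E.
Proof.
move=> bf; have [mf [B hB]] := bf.
have Lph := L2phi Hmu.
pose g := fun x => f x - f 2.
have bg : bounded_borel g.
  split; first by apply: measurable_funB => //; exact: measurable_cst.
  exists (B + `|f 2|) => x; apply: le_trans (ler_normB _ _) _.
  by apply: lerD.
have ha : aeeq mu (Phi (fun x => g x + f 2 * (cst 1 : R -> R) x) ph)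
    (fun x => Phi g ph x + f 2 * Phi (cst 1) ph x).
  exact: (fc_add FC (f 2) bg (bb_cst 1) Lph).
have ef : (fun x => g x + f 2 * (cst 1 : R -> R) x) = f.
  by apply/funext => x; rewrite /g /= mulr1 subrK.
rewrite ef in ha.
have h0 := Phi_g0 Hmu HK FC bg (subrr _).
have h1 := fc_one FC Lph.
have mPf : measurable_fun setT (Phi f ph) := (fc_L2 FC bf Lph).1.
rewrite /inner (ae_eq_integral (fun x => (f 2 * ph x)%:E)) //.
- exact: int_phi.
- apply/measurable_EFinP; apply: measurable_funM => //; exact: mphi.
- apply/measurable_EFinP; apply: measurable_funM; first exact: measurable_cst.
  exact: mphi.
- move: ha h0 h1; rewrite /aeeq => ha h0 h1.
  apply: filterS (ae_and ha (ae_and h0 h1)) => x [-> [-> ->]] _.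
  congr (_%:E); rewrite /phi indicE; case: (x \in _); rewrite /=; ring.
Qed.

End Fin.

Theorem corollary7p5 (R : realType) (mu : {measure set R -> \bar R})
    (K : (R -> R) -> R -> R) :
  cantor_measure mu -> opnorm_limit mu K ->
  [/\ aeeq mu (K (@phi R)) (fun x => 2 * @phi R x),
      forall n : nat, inner mu (@phi R) (iter n K (@phi R)) = (2 ^+ n)%:E
    & forall Phi, borel_fcalc mu K Phi ->
      forall nu : {finite_measure set R -> \bar R},
        (forall f, bounded_borel f ->
           inner mu (@phi R) (Phi f (@phi R)) = (\int[nu]_x (f x)%:E)%E) <->
        (forall A : set R, measurable A -> nu A = \d_(2 : R) A)].
Proof.
move=> Hmu HK; split.
- exact: K_phi.
- exact: inner_iter.
- move=> Phi FC nu; split.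
  + move=> H A mA.
    have bA : bounded_borel (\1_A : R -> R).
      split; first exact: measurable_indic.
      by exists 1 => x; rewrite indicE; case: (x \in A); rewrite ?normr1 ?normr0 ?ler01.
    have := H _ bA; rewrite (inner_Phi Hmu HK FC bA).
    have -> : (\int[nu]_x (\1_A x)%:E = nu A)%E.
      by rewrite integral_indic // setIT.
    by move=> <-; rewrite diracE indicE.
  + move=> H f bf; rewrite (inner_Phi Hmu HK FC bf).
    have mf : measurable_fun setT (fun x => (f x)%:E).
      by apply/measurable_EFinP; case: bf.
    rewrite (eq_measure_integral (\d_(2 : R))); last by move=> A mA _; exact: H.
    by rewrite integral_dirac // diracE mem_set // mul1e.
Qed.
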